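(* Let $A$ be a commutative ring with $1$, let $T\subset A$ be an archimedean semiring containing $\frac1n$ for some integer $n>1$, and let $f\in A$. Assume that for every maximal ideal $\mathfrak m$ of $A$ there exists $s\in A\setminus\mathfrak m$ such that $s\ge0$ on $X_A(T)$ and $sf\in T$. Then $f\in T$.
   Context: A semiring $T\subset A$ is a subset containing $0$ and $1$ and closed under addition and multiplication; it is archimedean if for every $f\in A$ there is $n\in\mathbb{Z}$ with $n+f\in T$. The real spectrum $\mathrm{Sper}(A)$ is the set of pairs $\alpha=(\mathfrak p,\le)$ with $\mathfrak p$ a prime ideal of $A$ and $\le$ an ordering of the residue field of $\mathfrak p$; for $a\in A$, $a\ge_\alpha0$ means the image of $a$ in that residue field is $\ge0$ under $\le$ (similarly $>_\alpha$). $X_A(T)=\{\alpha\in\mathrm{Sper}(A): a\ge_\alpha0 \text{ for all } a\in T\}$. An element $s\in A$ satisfies $s\ge0$ on $X_A(T)$ if $s\ge_\alpha0$ for all $\alpha\in X_A(T)$. *)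

(* Defs.v *)
From HB Require Import structures.
From mathcomp Require Import all_boot all_order all_algebra.
From mathcomp Require Import generic_quotient ring_quotient fraction.
From Stdlib Require Import ClassicalEpsilon.
Set Implicit Arguments. Unset Strict Implicit. Unset Printing Implicit Defensive.
Import Order.TTheory GRing.Theory Num.Theory.
Local Open Scope ring_scope.

(* A/p is given MathComp's quotient ring {ideal_quot p}; we equip it  *)
(* (classically) with its unit structure, so that it is an idomainType *)
(* and its fraction field {fraction _} is available.                  *)
Section ResidueField.
Variables (R : comNzRingType) (p : prime_idealr R).

Definition quotp : Type := {ideal_quot p}.
HB.instance Definition _ := GRing.ComNzRing.on quotp.

Definition quotp_unit : {pred quotp} :=
  fun x => if excluded_middle_informative (exists y : quotp, y * x = 1)
           then true else false.

Definition quotp_inv (x : quotp) : quotp :=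
  match excluded_middle_informative (exists y : quotp, y * x = 1) with
  | left H => proj1_sig (constructive_indefinite_description _ H)
  | right _ => x
  end.

Lemma quotp_mulVx : {in quotp_unit, left_inverse 1 quotp_inv *%R}.
Proof.
move=> x; rewrite unfold_in /quotp_unit /quotp_inv.
case: excluded_middle_informative => // H _.
by case: constructive_indefinite_description.
Qed.

Lemma quotp_unitPl : forall x y : quotp, y * x = 1 -> quotp_unit x.
Proof.
move=> x y yx; rewrite /quotp_unit.
by case: excluded_middle_informative => // -[]; exists y.
Qed.

Lemma quotp_invr_out : {in [predC quotp_unit], quotp_inv =1 id}.
Proof.
move=> x; rewrite inE /= unfold_in /quotp_unit /quotp_inv.
by case: excluded_middle_informative.
Qed.

HB.instance Definition _ := GRing.ComNzRing_hasMulInverse.Build quotp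
  quotp_mulVx quotp_unitPl quotp_invr_out.

Lemma quotp_integral : GRing.integral_domain_axiom quotp.
Proof. exact: Quotient.rquot_IdomainAxiom. Qed.

HB.instance Definition _ := GRing.ComUnitRing_isIntegral.Build quotp
  quotp_integral.

Definition residue_field : fieldType := {fraction quotp}.

Definition residue (a : R) : residue_field :=
  tofrac ((\pi_(quotp) a)%qT : quotp).

End ResidueField.

Definition field_ordering (K : fieldType) (le : rel K) : Prop :=
  [/\ reflexive le, antisymmetric le, transitive le & total le] /\
  (forall x y z, le x y -> le (x + z) (y + z)) /\
  (forall x y, le 0 x -> le 0 y -> le 0 (x * y)).

Record sper (A : comNzRingType) := Sper {
  sper_prime : prime_idealr A;
  sper_le : rel (residue_field sper_prime);
  sper_ordering : field_ordering sper_le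
}.

Definition sper_ge0 (A : comNzRingType) (alpha : sper A) (a : A) : Prop :=
  @sper_le A alpha 0 (residue (sper_prime alpha) a).

Definition in_XA (A : comNzRingType) (T : {pred A}) (alpha : sper A) : Prop :=
  forall a, a \in T -> sper_ge0 alpha a.

Definition nonneg_on_XA (A : comNzRingType) (T : {pred A}) (s : A) : Prop :=
  forall alpha : sper A, in_XA T alpha -> sper_ge0 alpha s.

Definition is_semiring (A : comNzRingType) (T : {pred A}) : Prop :=
  semiring_closed T.

Definition archimedean_semiring (A : comNzRingType) (T : {pred A}) : Prop :=
  forall f : A, exists n : int, n%:~R + f \in T.

Definition maximal_ideal (A : comNzRingType) (m : {pred A}) : Prop :=
  idealr_closed m /\
  forall J : {pred A}, idealr_closed J -> {subset m <= J} -> J =i m.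

(* Main.v *)
Require Import Defs.
From HB Require Import structures.
From mathcomp Require Import all_boot all_order all_algebra.
From mathcomp Require Import generic_quotient ring_quotient fraction.
From mathcomp Require Import ring zify.
From Stdlib Require Import ClassicalEpsilon Classical.
From mathcomp Require boolp classical_sets.
Import Order.TTheory GRing.Theory Num.Theory.
Set Implicit Arguments. Unset Strict Implicit. Unset Printing Implicit Defensive.
Local Open Scope ring_scope.

Definition bP (Q : Prop) : bool := if excluded_middle_informative Q then true else false.
Lemma bPE (Q : Prop) : bP Q = true <-> Q.
Proof. by rewrite /bP; case: excluded_middle_informative. Qed.
Lemma bPT (Q : Prop) : bP Q <-> Q.
Proof. exact: bPE. Qed.

Lemma frac_repr (R : idomainType) (x : {fraction R}) :
  exists a b : R, b != 0 /\ x = tofrac a / tofrac b.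
Proof.
rewrite -[x]reprK.
case: (repr x) => [[a b] /= hb].
exists a, b; split => //.
have hbF : tofrac b != 0 by rewrite tofrac_eq0.
apply: (mulfI hbF); rewrite mulrCA divff // mulr1.
rewrite {1}/tofrac -lock.
have E := FracField.pi_mul (Ratio b 1) (@mkRatio _ (a, b) hb).
etransitivity; first exact: (esym E).
rewrite /tofrac -lock.
apply/eqmodP; rewrite /= FracField.equivfE /FracField.mulf /=.
rewrite !numden_Ratio ?oner_neq0 ?mulf_neq0 ?oner_neq0 //= .
by rewrite mul1r mulr1 mulrC.
Qed.

Record pcone (A : comNzRingType) := PCone {
  pc :> A -> Prop;
  pc_add : forall x y, pc x -> pc y -> pc (x + y);
  pc_mul : forall x y, pc x -> pc y -> pc (x * y);
  pc_tot : forall x, pc x \/ pc (- x);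
  pc_n1 : ~ pc (-1);
  pc_prime : forall x y, pc (x * y) -> pc (- (x * y)) ->
     (pc x /\ pc (- x)) \/ (pc y /\ pc (- y)) }.

Section PCone.
Variables (A : comNzRingType) (C : pcone A).

Lemma pc_sq x : C (x * x).
Proof. by case: (pc_tot C x) => h; [|rewrite -mulrNN]; apply: pc_mul. Qed.
Lemma pc1 : C 1. Proof. by rewrite -(mulr1 1); apply: pc_sq. Qed.
Lemma pc0 : C 0. Proof. by case: (pc_tot C 0) => //; rewrite oppr0. Qed.

Definition supp : pred A := fun a => bP (C a /\ C (- a)).
Lemma suppE a : a \in supp <-> C a /\ C (- a).
Proof. by rewrite unfold_in /supp bPT. Qed.

Lemma supp_mul a x : x \in supp -> a * x \in supp.
Proof.
move=> /suppE [h1 h2]; apply/suppE.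
case: (pc_tot C a) => ha.
  by split; [|rewrite -mulrN]; apply: pc_mul.
by split; [rewrite -mulrNN|rewrite -mulNr]; apply: pc_mul.
Qed.

Lemma supp_idealr : idealr_closed supp.
Proof.
split.
- by apply/suppE; rewrite oppr0; split; apply: pc0.
- by apply/negP => /suppE [_ h]; apply: (@pc_n1 _ C h).
- move=> a u v /(supp_mul a) /suppE [h1 h2] /suppE [h3 h4]; apply/suppE.
  by rewrite opprD; split; apply: pc_add.
Qed.

HB.instance Definition _ := isIdealr.Build A supp supp_idealr.

Lemma supp_prime : prime_idealr_closed supp.
Proof.
move=> u v /suppE [h1 h2].
by case: (pc_prime h1 h2) => h; apply/orP; [left|right]; apply/suppE.
Qed.

HB.instance Definition _ := isPrimeIdealrClosed.Build A supp supp_prime.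

Definition pp : prime_idealr A := supp.

End PCone.

Section PConeOrd.
Variables (A : comNzRingType) (C : pcone A).
Local Notation p := (pp C).
Local Notation K := (residue_field p).
Local Notation res := (residue p).

Lemma inpE a : (a \in p) = (a \in supp C). Proof. by []. Qed.

Lemma res0 a : (res a == 0) = (a \in p).
Proof.
rewrite /residue tofrac_eq0.
have := Quotient.idealrBE (p : zmodClosed A) a 0. rewrite subr0 => ->.
by rewrite rmorph0.
Qed.

Lemma resM a b : res (a * b) = res a * res b. Proof. by rewrite /residue !rmorphM. Qed.
Lemma resD a b : res (a + b) = res a + res b. Proof. by rewrite /residue !rmorphD. Qed.
Lemma resN a : res (- a) = - res a. Proof. by rewrite /residue !rmorphN. Qed.
Lemma resB a b : res (a - b) = res a - res b. Proof. by rewrite /residue !rmorphB. Qed.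
Lemma res1 : res 1 = 1. Proof. by rewrite /residue !rmorph1. Qed.
Lemma res_0 : res 0 = 0. Proof. by rewrite /residue !rmorph0. Qed.

Lemma resnz b : b \notin p -> res b != 0.
Proof. by rewrite res0. Qed.

Lemma res_repr (z : K) : exists a b, b \notin p /\ z = res a / res b.
Proof.
have [x [y [hy ->]]] := frac_repr z.
exists (repr x), (repr y); split; last by rewrite /residue !reprK.
by rewrite -res0 /residue reprK tofrac_eq0.
Qed.

Lemma notp_mul b d : b \notin p -> d \notin p -> b * d \notin p.
Proof. by rewrite prime_idealrM => /negPf -> /negPf ->. Qed.

Lemma wd a b c d : b \notin p -> d \notin p ->
  res a / res b = res c / res d -> C (a * b) -> C (c * d).
Proof.
move=> hb hd E hab.
have rb := resnz hb; have rd := resnz hd.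
have E2 : res (a * d - c * b) = 0.
  rewrite resB !resM.
  have : res a / res b * (res b * res d) = res c / res d * (res b * res d) by rewrite E.
  rewrite mulrA divfK // [res b * _]mulrC mulrA divfK // => ->.
  by rewrite mulrC subrr.
have hs : (a * d - c * b) * (b * d) \in supp C.
  by rewrite -inpE prime_idealrM; apply/orP; left; rewrite -res0 E2.
have [hs1 hs2] := (suppE _ _).1 hs.
have hX : C (a * b * (d * d)) by apply: pc_mul => //; apply: pc_sq.
have hY : C (c * d * (b * b)).
  have -> : c * d * (b * b) = a * b * (d * d) + (- ((a * d - c * b) * (b * d))).
    by ring.
  by apply: pc_add.
case: (classic (C (c * d))) => // hn.
have hn' : C (- (c * d)) by case: (pc_tot C (c * d)).
have hY' : C (- (c * d * (b * b))) by rewrite -mulNr; apply: pc_mul => //; apply: pc_sq.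
have : c * d * (b * b) \in p by rewrite inpE; apply/suppE.
rewrite prime_idealrM => /orP [|]; first by rewrite inpE => /suppE [].
by rewrite prime_idealrM (negPf hb).
Qed.

Definition posF (z : K) : Prop :=
  exists a b : A, [/\ b \notin p, z = res a / res b & C (a * b)].

Lemma posF_rep z a b : b \notin p -> z = res a / res b -> posF z -> C (a * b).
Proof.
move=> hb E [c [d [hd E' hcd]]].
by apply: (wd hd hb _ hcd); rewrite -E' -E.
Qed.

Lemma one_notp : 1 \notin p.
Proof. by rewrite -res0 res1 oner_neq0. Qed.

Lemma posF_res a : posF (res a) <-> C a.
Proof.
split.
  move=> h; rewrite -[a]mulr1; apply: (posF_rep one_notp _ h).
  by rewrite res1 divr1.
by move=> h; exists a, 1; split; rewrite ?res1 ?divr1 ?mulr1 //; apply: one_notp.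
Qed.

Lemma posF0 : posF 0.
Proof. by rewrite -res_0; apply/posF_res/pc0. Qed.

Lemma posFD z w : posF z -> posF w -> posF (z + w).
Proof.
move=> [a [b [hb -> hab]]] [c [d [hd -> hcd]]].
exists (a * d + c * b), (b * d); split.
- exact: notp_mul.
- have rb := resnz hb; have rd := resnz hd.
  by rewrite resD !resM addf_div.
- have -> : (a * d + c * b) * (b * d) = a * b * (d * d) + c * d * (b * b) by ring.
  by apply: pc_add; apply: pc_mul => //; apply: pc_sq.
Qed.

Lemma posFM z w : posF z -> posF w -> posF (z * w).
Proof.
move=> [a [b [hb -> hab]]] [c [d [hd -> hcd]]].
exists (a * c), (b * d); split.
- exact: notp_mul.
- have rb := resnz hb; have rd := resnz hd.
  by rewrite !resM mulf_div.
- have -> : (a * c) * (b * d) = (a * b) * (c * d) by ring.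
  exact: pc_mul.
Qed.

Lemma posF_tot z : posF z \/ posF (- z).
Proof.
have [a [b [hb E]]] := res_repr z.
case: (pc_tot C (a * b)) => h; [left|right].
  by exists a, b.
exists (- a), b; split => //; first by rewrite E resN mulNr.
by rewrite mulNr.
Qed.

Lemma posF_anti z : posF z -> posF (- z) -> z = 0.
Proof.
have [a [b [hb E]]] := res_repr z.
move=> h1 h2.
have c1 := posF_rep hb E h1.
have c2 : C (- a * b).
  by apply: (posF_rep hb _ h2); rewrite E resN mulNr.
have : a * b \in p by rewrite inpE; apply/suppE; rewrite -mulNr.
rewrite prime_idealrM (negPf hb) orbF -res0 => /eqP ha.
by rewrite E ha mul0r.
Qed.

Definition pc_le : rel K := fun x y => bP (posF (y - x)).

Lemma pc_le_ord : field_ordering pc_le.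
Proof.
rewrite /pc_le; split; [split|split].
- by move=> x; apply/bPT; rewrite subrr; apply: posF0.
- move=> x y /andP [/bPT h1 /bPT h2]; apply/eqP; rewrite eq_sym -subr_eq0.
  by apply/eqP/posF_anti => //; rewrite opprB.
- move=> y x z /bPT h1 /bPT h2; apply/bPT.
  by have := posFD h2 h1; rewrite addrA subrK.
- move=> x y; case: (posF_tot (y - x)) => h; apply/orP; [left|right]; apply/bPT => //.
  by rewrite opprB in h.
- move=> x y z /bPT h; apply/bPT.
  by have -> : (y + z) - (x + z) = y - x by rewrite opprD addrACA subrr addr0.
- move=> x y /bPT h1 /bPT h2; apply/bPT; rewrite subr0; rewrite subr0 in h1 h2.
  by rewrite subr0 in h2; apply: posFM.
Qed.

Definition pc_sper : sper A := @Sper A (pp C) pc_le pc_le_ord.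

Lemma pc_sper_ge0 a : sper_ge0 pc_sper a <-> C a.
Proof.
rewrite /sper_ge0 /= /pc_le subr0; split.
  by move/bPT/posF_res.
by move=> h; apply/bPT/posF_res.
Qed.

End PConeOrd.

Module ZornM.
Import boolp classical_sets.

Lemma zorn_max (T : Type) (Phi : (T -> Prop) -> Prop) :
  (exists X, Phi X) -> (forall X, Phi X -> exists t, X t) ->
  (forall F : (T -> Prop) -> Prop, (forall X, F X -> Phi X) ->
     (forall X Y, F X -> F Y -> (forall t, X t -> Y t) \/ (forall t, Y t -> X t)) ->
     (exists X, F X) -> Phi (fun t => exists X, F X /\ X t)) ->
  exists M, Phi M /\ forall Y, Phi Y -> (forall t, M t -> Y t) -> forall t, Y t -> M t.
Proof.
move=> [X0 hX0] hne hch.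
pose P (B : set T) := Phi B \/ (forall t, ~ B t).
have : exists A0, P A0 /\ forall B, (A0 `<` B)%classic -> ~ P B.
  apply: Zorn_bigcup => F FP Ftot.
  case: (Classical_Prop.classic (exists X, F X /\ Phi X)) => [[X [FX PX]]|hno].
    left.
    have -> : (\bigcup_(X in F) X)%classic = (fun t => exists X, (fun Y => F Y /\ Phi Y) X /\ X t).
      apply/funext => t; apply/propext; split.
        move=> [Y FY Yt]; exists Y; split => //; split => //.
        by case: (FP _ FY) => // h; exfalso; apply: (h t).
      by move=> [Y [[FY _] Yt]]; exists Y.
    apply: hch.
    - by move=> Y [].
    - by move=> Y Z [FY _] [FZ _]; apply: Ftot.
    - by exists X.
  right => t [Y FY Yt].
  case: (FP _ FY) => [PY|h]; last exact: (h t).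
  by apply: hno; exists Y.
move=> [M [PM hmax]].
have PhiM : Phi M.
  case: PM => // hemp; exfalso.
  apply: (hmax X0); last by left.
  split; first by move=> t /hemp.
  by move=> hsub; have [t Xt] := hne _ hX0; apply: (hemp t); apply: hsub.
exists M; split => // Y PY MY t Yt.
apply: Classical_Prop.NNPP => hMt; apply: (hmax Y); last by left.
by split => // hsub; apply: hMt; apply: hsub.
Qed.

End ZornM.
Import ZornM.

Local Open Scope ring_scope.

Section Preord.
Variable A : comNzRingType.

Definition preord (P : A -> Prop) : Prop :=
  [/\ forall x y, P x -> P y -> P (x + y),
      forall x y, P x -> P y -> P (x * y) &
      forall x, P (x * x)].

Definition ext (P : A -> Prop) (c : A) : A -> Prop :=
  fun z => exists p q, [/\ P p, P q & z = p + c * q].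

Lemma preord0 P : preord P -> P 0.
Proof. by case=> _ _ h; rewrite -(mulr0 0). Qed.
Lemma preord1 P : preord P -> P 1.
Proof. by case=> _ _ h; rewrite -(mulr1 1). Qed.

Lemma ext_preord P c : preord P -> preord (ext P c).
Proof.
move=> hP; have [hadd hmul hsq] := hP; split.
- move=> x y [p [q [hp hq ->]]] [p' [q' [hp' hq' ->]]].
  exists (p + p'), (q + q'); split; [exact: hadd|exact: hadd|ring].
- move=> x y [p [q [hp hq ->]]] [p' [q' [hp' hq' ->]]].
  exists (p * p' + (c * c) * (q * q')), (p * q' + p' * q); split.
  + by apply: (hadd); apply: (hmul) => //; apply: (hmul).
  + by apply: (hadd); apply: (hmul).
  + ring.
- move=> x; exists (x * x), 0; split => //; [exact: preord0|ring].
Qed.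

Lemma ext_sub P c : preord P -> forall x, P x -> ext P c x.
Proof. by move=> hP x hx; exists x, 0; split => //; [exact: preord0|ring]. Qed.

Lemma ext_c P c : preord P -> ext P c c.
Proof. by move=> hP; exists 0, 1; split; [exact: preord0|exact: preord1|ring]. Qed.

Section Max.
Variables (P0 M : A -> Prop).
Hypothesis hM : preord M /\ (forall x, P0 x -> M x) /\ ~ M (-1).
Hypothesis hmax : forall Y, (preord Y /\ (forall x, P0 x -> Y x) /\ ~ Y (-1)) ->
  (forall t, M t -> Y t) -> forall t, Y t -> M t.

Lemma max_ext c : ~ M c -> exists p q, [/\ M p, M q & -1 = p + c * q].
Proof.
move=> hc; apply: NNPP => hn; apply: hc.
have [hpM [hP0 hn1]] := hM.
apply: (hmax (Y := ext M c)); last exact: ext_c.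
- split; first exact: ext_preord.
  split; first by move=> x /hP0; apply: ext_sub.
  by move=> [p [q [hp hq E]]]; apply: hn; exists p, q.
- exact: ext_sub.
Qed.

Lemma max_neg a b : M (- (a * b)) -> ~ M (- a) -> ~ M (- b) -> False.
Proof.
move=> hab ha hb.
have [hpM [_ hn1]] := hM; have [hadd hmul hsq] := hpM.
have [p1 [q1 [h1 h2 e1]]] := max_ext ha.
have [p2 [q2 [h3 h4 e2]]] := max_ext hb.
apply: hn1.
have ep1 : p1 = -1 + a * q1 by rewrite e1; ring.
have ep2 : p2 = -1 + b * q2 by rewrite e2; ring.
have -> : -1 = p1 + p2 + p1 * p2 + (- (a * b)) * (q1 * q2).
  by rewrite ep1 ep2; ring.
by apply: (hadd); [apply: (hadd); [apply: (hadd)|apply: (hmul)]|apply: (hmul); [|apply: (hmul)]].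
Qed.

Lemma max_tot x : M x \/ M (- x).
Proof.
apply: NNPP => h.
apply: (@max_neg x (- x)).
- by rewrite mulrN opprK; have [[_ _ hsq] _] := hM; apply: (hsq).
- by move=> hx; apply: h; right.
- by rewrite opprK => hx; apply: h; left.
Qed.

Lemma max_pcone : exists C : pcone A, forall x, M x <-> C x.
Proof.
have [hpM [_ hn1]] := hM; have [hadd hmul hsq] := hpM.
have sgn : forall a, ~ (M a /\ M (- a)) -> exists a', [/\ M a', ~ M (- a') & (a' = a \/ a' = - a)].
  move=> a ha; case: (classic (M a)) => h.
    by exists a; split => //; [move=> h'; apply: ha|left].
  by exists (- a); rewrite opprK; split => //; [case: (max_tot a)|right].
suff hpr : forall x y, M (x * y) -> M (- (x * y)) ->
     (M x /\ M (- x)) \/ (M y /\ M (- y)).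
  by exists (@PCone A M hadd hmul max_tot hn1 hpr).
move=> x y hxy hnxy; apply: NNPP => hn.
have [hx' [x' [hx1 hx2 hx3]]] : ~ (M x /\ M (- x)) /\ exists a', [/\ M a', ~ M (- a') & (a' = x \/ a' = - x)].
  by split; [|apply: sgn]; move=> h; apply: hn; left.
have [y' [hy1 hy2 hy3]] : exists a', [/\ M a', ~ M (- a') & (a' = y \/ a' = - y)].
  by apply: sgn => h; apply: hn; right.
apply: (max_neg _ hx2 hy2).
by case: hx3 => ->; case: hy3 => ->; rewrite ?mulNr ?mulrN ?opprK.
Qed.
End Max.

Lemma pstz (P0 : A -> Prop) : preord P0 -> ~ P0 (-1) ->
  exists C : pcone A, forall x, P0 x -> C x.
Proof.
move=> hP0 hn.
case: (@zorn_max A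
  (fun Y => preord Y /\ (forall x, P0 x -> Y x) /\ ~ Y (-1))); last first.
  move=> M [hM hmax].
  have [C hC] := max_pcone hM hmax.
  by exists C => x hx; apply/hC; have [_ [hs _]] := hM; apply: hs.
- move=> F hF hch [X0 FX0].
  have two : forall x y, (exists X, F X /\ X x) -> (exists X, F X /\ X y) ->
      exists X, [/\ F X, X x & X y].
    move=> x y [X [FX Xx]] [Y [FY Yy]].
    case: (hch _ _ FX FY) => h; first by exists Y; split => //; apply: h.
    by exists X; split => //; apply: h.
  split; [split|split].
  + move=> x y hx hy; have [X [FX Xx Xy]] := two _ _ hx hy.
    by exists X; split => //; have [[ha _ _] _] := hF _ FX; apply: ha.
  + move=> x y hx hy; have [X [FX Xx Xy]] := two _ _ hx hy.
    by exists X; split => //; have [[_ hm _] _] := hF _ FX; apply: hm.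
  + move=> x; exists X0; split => //; have [[_ _ hs] _] := hF _ FX0; apply: hs.
  + by move=> x hx; exists X0; split => //; have [_ [hs _]] := hF _ FX0; apply: hs.
  + by move=> [X [FX Xn]]; have [_ [_ hn']] := hF _ FX; apply: hn'.
- by move=> X [hX _]; exists 0; apply: preord0.
- by exists P0.
Qed.
End Preord.


Section NatL.
Local Open Scope nat_scope.
Lemma pow_mono a b K : a <= b -> a ^ K <= b ^ K.
Proof. by move=> h; elim: K => [|K ih] //; rewrite !expnS leq_mul. Qed.

Lemma bern a K : a ^ K * (a + K) <= a * (a + 1) ^ K.
Proof.
elim: K => [|K ih]; first by rewrite !expn0 mul1n muln1 addn0.
rewrite !expnS.
have h1 : a ^ K <= (a + 1) ^ K by apply: pow_mono; rewrite leq_addr.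
nia.
Qed.

Lemma geo_nat a c K : 1 <= a -> a * c <= K -> c * a ^ K <= (a + 1) ^ K.
Proof.
move=> ha hK.
have := bern a K.
nia.
Qed.




End NatL.
Local Open Scope ring_scope.
Section Arith.
Variables (A : comNzRingType) (T : {pred A}).
Hypothesis hT : is_semiring T.
Hypothesis harch : archimedean_semiring T.
Variables (n : nat) (u : A).
Hypothesis hn : (1 < n)%N.
Hypothesis hu : u \in T.
Hypothesis hnu : n%:R * u = 1.

Lemma T0 : 0 \in T. Proof. by case: hT => [[]]. Qed.
Lemma T1 : 1 \in T. Proof. by case: hT => _ []. Qed.
Lemma TD x y : x \in T -> y \in T -> x + y \in T.
Proof. by case: hT => [[_ h] _]; apply: h. Qed.
Lemma TM x y : x \in T -> y \in T -> x * y \in T.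
Proof. by case: hT => _ [_ h]; apply: h. Qed.

Lemma Tn k : (k%:R : A) \in T.
Proof. by elim: k => [|k ih]; [rewrite T0|rewrite -natr1; apply: TD => //; apply: T1]. Qed.

Lemma TX x k : x \in T -> x ^+ k \in T.
Proof. by move=> hx; elim: k => [|k ih]; [rewrite expr0 T1|rewrite exprS; apply: TM]. Qed.

Lemma Tu k : u ^+ k \in T. Proof. exact: TX. Qed.

Lemma Tsum (I : Type) (r : seq I) (F : I -> A) :
  (forall i, F i \in T) -> \sum_(i <- r) F i \in T.
Proof. by move=> h; apply: (big_ind (fun x => x \in T)) => //; [apply: T0|apply: TD]. Qed.

Lemma nuX e : (n ^ e)%N%:R * u ^+ e = 1.
Proof. by rewrite natrX -exprMn hnu expr1n. Qed.

Lemma uX_n e j : u ^+ e = (n ^ j)%N%:R * u ^+ (e + j).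
Proof. by rewrite exprD mulrCA nuX mulr1. Qed.

Lemma Dle i j a b : (i <= j)%N -> (b <= a * n ^ (j - i))%N ->
  a%:R * u ^+ i - b%:R * u ^+ j \in T.
Proof.
move=> hij hb.
rewrite (uX_n i (j - i)) subnKC // mulrA -natrM -mulrBl -natrB //.
by apply: TM; [apply: Tn|apply: Tu].
Qed.

Lemma Dle1 i j b : (i <= j)%N -> (b <= n ^ (j - i))%N ->
  u ^+ i - b%:R * u ^+ j \in T.
Proof. by move=> h1 h2; have := @Dle i j 1 b h1; rewrite mul1r mul1n; apply. Qed.

Lemma arch_nat f : exists N : nat, N%:R + f \in T.
Proof.
have [[k|k] hk] := harch f.
  by exists k.
exists 0%N; rewrite add0r.
have -> : f = (Negz k)%:~R + f + (k.+1)%:R by rewrite NegzE mulrNz pmulrn; ring.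
  by apply: TD => //; apply: Tn.
Qed.

Lemma arch_pow f : exists k, (n ^ k)%N%:R + f \in T.
Proof.
have [N hN] := arch_nat f; exists N.
have -> : (n ^ N)%N%:R + f = N%:R + f + (n ^ N - N)%N%:R.
  rewrite addrAC -natrD subnKC //.
  by apply: ltnW; apply: ltn_expl.
by apply: TD => //; apply: Tn.
Qed.

Definition Tb x := forall e, x + u ^+ e \in T.

Lemma Tb_T x : x \in T -> Tb x.
Proof. by move=> hx e; apply: TD => //; apply: Tu. Qed.

Lemma Tb_lift x e : Tb (x - u ^+ e) -> x \in T.
Proof. by move=> /(_ e); rewrite subrK. Qed.

Lemma u_gap e : u ^+ e - 2%:R * u ^+ e.+1 \in T.
Proof. by apply: Dle1 => //; rewrite subSnn expn1. Qed.

Lemma TbD x y : Tb x -> Tb y -> Tb (x + y).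
Proof.
move=> hx hy e.
have -> : x + y + u ^+ e = (x + u ^+ e.+1) + (y + u ^+ e.+1) + (u ^+ e - 2%:R * u ^+ e.+1).
  by rewrite mulr2n mulrDl !mul1r; ring.
by apply: TD; [apply: TD|apply: u_gap].
Qed.

Lemma TbM x y : Tb x -> Tb y -> Tb (x * y).
Proof.
move=> hx hy e.
have [m hm] := arch_pow (- (x + y)).
pose p := (e.+1 + m)%N.
have E : (n ^ m)%N%:R * u ^+ p = u ^+ e.+1 by rewrite /p addnC exprD mulrA nuX mul1r.
have -> : x * y + u ^+ e = (x + u ^+ p) * (y + u ^+ p) + u ^+ p * ((n ^ m)%N%:R - (x + y))
   + (u ^+ e - 2%:R * u ^+ e.+1) + (u ^+ e.+1 - 1%:R * u ^+ (p + p)).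
  by rewrite exprD -E; ring.
apply: TD; last by apply: Dle1; [rewrite /p; lia|rewrite expn_gt0; lia].
apply: TD; last exact: u_gap.
apply: TD; first by apply: TM.
by apply: TM => //; apply: Tu.
Qed.

Lemma Tb0 : Tb 0. Proof. by apply: Tb_T; apply: T0. Qed.
Lemma Tb1 : Tb 1. Proof. by apply: Tb_T; apply: T1. Qed.

Lemma TbX x k : Tb x -> Tb (x ^+ k).
Proof. by move=> hx; elim: k => [|k ih]; [rewrite expr0; apply: Tb1|rewrite exprS; apply: TbM]. Qed.

Lemma Tbsum (I : Type) (r : seq I) (F : I -> A) :
  (forall i, Tb (F i)) -> Tb (\sum_(i <- r) F i).
Proof. by move=> h; apply: (big_ind Tb) => //; [apply: Tb0|apply: TbD]. Qed.

Lemma one_sub_u m : 1 - u ^+ m = (n ^ m - 1)%N%:R * u ^+ m.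
Proof.
rewrite natrB ?expn_gt0 ?(ltnW hn) // mulrBl nuX mul1r //.
Qed.

Lemma GEO y m B j : (0 < m)%N -> Tb y -> Tb ((1 - u ^+ m) - y) ->
  exists K0, forall K, (K0 <= K)%N -> Tb (u ^+ j - B%:R * y ^+ K).
Proof.
move=> hm hy hgap.
pose a := (n ^ m - 1)%N.
have ha : (1 <= a)%N.
  rewrite /a; have : (n ^ 1 <= n ^ m)%N by rewrite leq_exp2l.
  rewrite expn1; lia.
exists (a * (B * n ^ j) + j)%N => K hK.
have -> : u ^+ j - B%:R * y ^+ K = (u ^+ j - B%:R * (1 - u ^+ m) ^+ K)
    + B%:R * (((1 - u ^+ m) - y) * (\sum_(i < K) (1 - u ^+ m) ^+ (K.-1 - i) * y ^+ i)).
  by rewrite -subrXX; ring.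
apply: TbD.
  apply: Tb_T; rewrite one_sub_u exprMn -natrX -exprM mulrA -natrM.
  apply: Dle1; first by nia.
  have e1 : (a + 1 = n ^ m)%N by rewrite /a subnK // expn_gt0 ltnW.
  have hg := geo_nat ha (leq_trans (leq_addr j _) hK); rewrite e1 -expnM in hg.
  have e2 : (n ^ (m * K) = n ^ (m * K - j) * n ^ j)%N by rewrite -expnD subnK //; nia.
  rewrite e2 in hg.
  have hnj : (0 < n ^ j)%N by rewrite expn_gt0 ltnW.
  rewrite -(leq_pmul2r hnj); rewrite -/a; nia.
apply: TbM; first by apply: Tb_T; apply: Tn.
apply: TbM => //.
apply: Tbsum => i; apply: TbM; last by apply: TbX.
by apply: TbX; apply: Tb_T; rewrite one_sub_u; apply: TM; [apply: Tn|apply: Tu].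
Qed.

Lemma geom_sum (y : A) K : (1 - y) * (\sum_(i < K) y ^+ i) = 1 - y ^+ K.
Proof.
have := subrXX 1 y K; rewrite expr1n => ->.
by congr (_ * _); apply: eq_bigr => i _; rewrite expr1n mul1r.
Qed.

Lemma CORE (y : A) m M j : (0 < m)%N -> Tb y -> Tb ((1 - u ^+ m) - y) ->
  exists K, forall w a, Tb (w - u ^+ j) -> Tb (a + M%:R) ->
    Tb (w * (\sum_(i < K.+1) y ^+ i) + a * y ^+ K.+1 - u ^+ j.+1).
Proof.
move=> hm hy hgap.
have [K0 hK0] := GEO M j.+1 hm hy hgap.
exists K0 => w a hw ha.
rewrite big_ord_recl expr0.
set S' := \sum_(i < K0) _.
have hS' : Tb S' by apply: Tbsum => i; apply: TbX.
have -> : w * (1 + S') + a * y ^+ K0.+1 - u ^+ j.+1 =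
   (w - u ^+ j) * (1 + S') + u ^+ j * S' + (a + M%:R) * y ^+ K0.+1
   + (u ^+ j.+1 - M%:R * y ^+ K0.+1) + (u ^+ j - 2%:R * u ^+ j.+1) by ring.
apply: TbD; last by apply: Tb_T; apply: u_gap.
apply: TbD; last by apply: hK0.
apply: TbD; last by apply: TbM => //; apply: TbX.
apply: TbD; last by apply: TbM => //; apply: Tb_T; apply: Tu.
by apply: TbM => //; apply: TbD => //; apply: Tb1.
Qed.

Lemma TbB_u (x : A) i j : (i <= j)%N -> Tb (x - u ^+ i) -> Tb (x - u ^+ j).
Proof.
move=> hij hx.
have -> : x - u ^+ j = (x - u ^+ i) + (u ^+ i - 1%:R * u ^+ j) by ring.
apply: TbD => //; apply: Tb_T; apply: Dle1 => //.
by rewrite expn_gt0 ltnW.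
Qed.

Lemma DL (a q : A) j : Tb q -> Tb (a * q - u ^+ j) -> exists e, Tb (a - u ^+ e).
Proof.
move=> hq haq.
have [k hk] := arch_pow (- q).
have [l hl] := arch_pow (- a).
have [l' hl'] := arch_pow a.
pose q' := u ^+ k * q.
pose y := 1 - q'.
have hy : Tb y.
  apply: Tb_T; have -> : y = u ^+ k * ((n ^ k)%N%:R - q).
    by rewrite /y /q' mulrBr [u ^+ k * _%:R]mulrC nuX.
  by apply: TM => //; apply: Tu.
have hw : Tb (a * q' - u ^+ (j + k)).
  have -> : a * q' - u ^+ (j + k) = u ^+ k * (a * q - u ^+ j) by rewrite /q' exprD; ring.
  by apply: TbM => //; apply: Tb_T; apply: Tu.
have hgap0 : Tb (q' - u ^+ (j + k + l)).
  have -> : q' - u ^+ (j + k + l) = u ^+ l * ((n ^ l)%N%:R - a) * q' + u ^+ l * (a * q' - u ^+ (j + k)).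
    have := nuX l; rewrite exprD => E.
    by rewrite -[in LHS](mul1r q') -[X in X * q']E; ring.
  have hq' : Tb q' by rewrite /q'; apply: TbM => //; apply: Tb_T; apply: Tu.
  apply: TbD; apply: TbM => //; try (by apply: Tb_T; apply: Tu).
  by apply: TbM; apply: Tb_T => //; apply: Tu.
have hgap : Tb ((1 - u ^+ (j + k + l).+1) - y).
  have -> : (1 - u ^+ (j + k + l).+1) - y = q' - u ^+ (j + k + l).+1 by rewrite /y; ring.
  exact: (TbB_u (leqnSn _) hgap0).
have [K hK] := CORE (n ^ l')%N (j + k) (ltn0Sn _) hy hgap.
exists (j + k).+1.
have := hK (a * q') a hw; rewrite addrC => /(_ (Tb_T hl')).
have -> : a * q' * (\sum_(i < K.+1) y ^+ i) + a * y ^+ K.+1 =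
   a * ((1 - y) * (\sum_(i < K.+1) y ^+ i) + y ^+ K.+1) by rewrite /y; ring.
by rewrite geom_sum subrK mulr1.
Qed.

End Arith.


Section Mom.
Variable A : comNzRingType.

Lemma mom_shift (x z : A) d (h : nat -> A) :
  \sum_(i < d.+2) ('C(d.+1, i) * i)%:R * h i * (x ^+ i * z ^+ (d.+1 - i)) =
  d.+1%:R * x * \sum_(i < d.+1) 'C(d, i)%:R * h i.+1 * (x ^+ i * z ^+ (d - i)).
Proof.
rewrite big_ord_recl /= muln0 mul0r mul0r add0r mulr_sumr.
apply: eq_bigr => i _ /=.
have -> : ('C(d.+1, i.+1) * i.+1)%N = (d.+1 * 'C(d, i))%N by rewrite mulnC -mul_bin_diag.
by rewrite natrM subSS exprS; ring.
Qed.

Lemma mom0 (y : A) d : \sum_(i < d.+1) 'C(d, i)%:R * (y ^+ i * (1 - y) ^+ (d - i)) = 1.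
Proof.
have := exprDn (1 - y) y d.
rewrite subrK expr1n => E; rewrite [in RHS]E.
by apply: eq_bigr => i _; rewrite -mulr_natl; ring.
Qed.

Lemma mom1 (y : A) d :
  \sum_(i < d.+1) ('C(d, i) * i)%:R * (y ^+ i * (1 - y) ^+ (d - i)) = d%:R * y.
Proof.
case: d => [|d]; first by rewrite big_ord1 muln0 !mul0r.
have := mom_shift y (1 - y) d (fun _ => 1).
rewrite (eq_bigr (fun i : 'I_d.+1 => 'C(d, i)%:R * (y ^+ i * (1 - y) ^+ (d - i)))); last first.
  by move=> i _; rewrite mulr1.
rewrite mom0 mulr1 => <-.
by apply: eq_bigr => i _; rewrite mulr1.
Qed.

Lemma mom2 (y : A) d :
  \sum_(i < d.+1) ('C(d, i) * i)%:R * i%:R * (y ^+ i * (1 - y) ^+ (d - i))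
   = d%:R * (d.-1)%:R * y ^+ 2 + d%:R * y.
Proof.
case: d => [|d]; first by rewrite big_ord1 muln0 !mul0r ?add0r ?mulr0 ?mul0r ?add0r.
rewrite (mom_shift y (1 - y) d (fun i => i%:R)).
rewrite (eq_bigr (fun i : 'I_d.+1 => ('C(d, i) * i)%:R * (y ^+ i * (1 - y) ^+ (d - i))
     + 'C(d, i)%:R * (y ^+ i * (1 - y) ^+ (d - i)))); last first.
  by move=> i _; rewrite natrM -natr1; ring.
by rewrite big_split /= mom1 mom0 /=; ring.
Qed.

Lemma variance (y r u : A) d : d%:R * u = 1 ->
  \sum_(i < d.+1) 'C(d, i)%:R * (i%:R * u - r) ^+ 2 * (y ^+ i * (1 - y) ^+ (d - i))
   = (y - r) ^+ 2 + u * (y * (1 - y)).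
Proof.
move=> hd.
have E : \sum_(i < d.+1) 'C(d, i)%:R * (i%:R * u - r) ^+ 2 * (y ^+ i * (1 - y) ^+ (d - i))
  = u ^+ 2 * (\sum_(i < d.+1) ('C(d, i) * i)%:R * i%:R * (y ^+ i * (1 - y) ^+ (d - i)))
    - 2%:R * u * r * (\sum_(i < d.+1) ('C(d, i) * i)%:R * (y ^+ i * (1 - y) ^+ (d - i)))
    + r ^+ 2 * (\sum_(i < d.+1) 'C(d, i)%:R * (y ^+ i * (1 - y) ^+ (d - i))).
  rewrite !mulr_sumr -sumrB -big_split /=.
  by apply: eq_bigr => i _; rewrite natrM; ring.
rewrite E mom0 mom1 mom2; clear E.
case: d hd => [|d] hd; first by move: hd; rewrite mul0r => /eqP; rewrite eq_sym oner_eq0.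
apply/eqP; rewrite -subr_eq0; apply/eqP.
rewrite /=.
set D := d.+1%:R.
have R : forall X Y : A, X - Y = (D * u - 1) * (y ^+ 2 * (D * u + 1) - u * y ^+ 2 + u * y - 2%:R * r * y)
   -> X - Y = 0 by move=> X Y ->; rewrite hd subrr mul0r.
apply: R.
rewrite /D -natr1. ring.
Qed.

End Mom.


Section Sq.
Variables (A : comNzRingType) (T : {pred A}).
Hypothesis hT : is_semiring T.
Hypothesis harch : archimedean_semiring T.
Variables (n : nat) (u : A).
Hypothesis hn : (1 < n)%N.
Hypothesis hu : u \in T.
Hypothesis hnu : n%:R * u = 1.

Local Notation Tb := (Tb T u).
Local Notation TD := (TD hT).
Local Notation TM := (TM hT).
Local Notation Tn := (Tn hT).
Local Notation Tu := (Tu hT hu).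
Local Notation nuX := (nuX hnu).

Lemma eq_mod (X Y Z R : A) : Z = 0 -> X - Y = Z * R -> X = Y.
Proof. by move=> -> /eqP; rewrite mul0r subr_eq0 => /eqP. Qed.

Lemma natsq (X Y : nat) : exists Z : nat, (X%:R - Y%:R : A) ^+ 2 = Z%:R.
Proof.
case: (leqP Y X) => h.
  by exists ((X - Y) ^ 2)%N; rewrite natrX natrB.
exists ((Y - X) ^ 2)%N; rewrite natrX natrB ?(ltnW h) //.
by rewrite -sqrrN opprB.
Qed.

Lemma Dsq a b i j : (a%:R * u ^+ i - b%:R * u ^+ j) ^+ 2 \in T.
Proof.
rewrite (uX_n hnu i j) (uX_n hnu j i) addnC !mulrA -!natrM -mulrBl exprMn.
have [Z ->] := natsq (a * n ^ j) (b * n ^ i).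
by apply: TM; [apply: Tn|apply: TX => //; apply: Tu].
Qed.

Lemma Tb_sq (b : A) : Tb (b * b).
Proof.
move=> e.
have [N1 h1] := arch_nat hT harch b.
have [N2 h2] := arch_nat hT harch (- b).
pose N0 := (N1 + N2)%N.
have hp : N0%:R + b \in T by rewrite /N0 natrD addrAC; apply: TD => //; apply: Tn.
have hm : N0%:R - b \in T by rewrite /N0 natrD -addrA; apply: TD => //; apply: Tn.
have [k hk] : exists k, (2 * N0 <= n ^ k)%N by exists (2 * N0)%N; apply: ltnW; apply: ltn_expl.
pose y := u ^+ k * (N0%:R + b).
pose r := N0%:R * u ^+ k.
have hy : y \in T by apply: TM => //; apply: Tu.
have h1y : 1 - y \in T.
  have E := nuX k.
  have -> : 1 - y = u ^+ k * ((n ^ k - 2 * N0)%N%:R + (N0%:R - b)).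
    rewrite natrB // natrM /y.
    apply: (@eq_mod _ _ ((n ^ k)%N%:R * u ^+ k - 1) (-1)); first by rewrite E subrr.
    ring.
  by apply: TM; [apply: Tu|apply: TD => //; apply: Tn].
pose e' := (e + k + k)%N.
pose d := (n ^ e')%N.
have V := variance y r (nuX e').
have -> : b * b + u ^+ e = (n ^ k * n ^ k)%N%:R *
   ((\sum_(i < d.+1) 'C(d, i)%:R * (i%:R * u ^+ e' - r) ^+ 2 * (y ^+ i * (1 - y) ^+ (d - i)))
    + u ^+ e' * ((1 - y) + y * y)).
  have Ue : u ^+ e' = u ^+ e * u ^+ k * u ^+ k by rewrite /e' !exprD.
  rewrite V Ue natrM /y /r.
  have E := nuX k.
  apply: (@eq_mod _ _ ((n ^ k)%N%:R * u ^+ k - 1)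
     (- (1 + (n ^ k)%N%:R * u ^+ k) * (b * b + u ^+ e))); first by rewrite E subrr.
  ring.
apply: TM; first by apply: Tn.
apply: TD.
  apply: (Tsum hT) => i; apply: TM; last by apply: TM; apply: TX.
  apply: TM; first by apply: Tn.
  by rewrite /r -[X in X * u ^+ e']/(i%:R); apply: Dsq.
by apply: TM; [apply: Tu|apply: TD => //; apply: TM].
Qed.
End Sq.


Lemma sum_in (A : comNzRingType) (P : A -> Prop) (I : eqType) (r : seq I) (F : I -> A) :
  P 0 -> (forall x y, P x -> P y -> P (x + y)) ->
  (forall i, i \in r -> P (F i)) -> P (\sum_(i <- r) F i).
Proof.
move=> h0 hD hF; rewrite big_seq.
by apply: (big_ind P) => // i; apply: hF.
Qed.

Lemma pc_list (A : comNzRingType) (C : pcone A) (l : seq A) :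
  (forall x, x \in l -> C x) -> C (- \sum_(x <- l) x) -> forall x, x \in l -> C (- x).
Proof.
elim: l => [|x l ih] hl hs z //.
rewrite big_cons in hs.
have hS : C (\sum_(y <- l) y).
  apply: (sum_in (P := C)); [exact: pc0|exact: pc_add|].
  by move=> i hi; apply: hl; rewrite inE hi orbT.
rewrite inE => /orP [/eqP ->|hz].
  by have := pc_add hs hS; rewrite opprD subrK.
apply: ih => //.
  by move=> i hi; apply: hl; rewrite inE hi orbT.
have := pc_add hs (hl x (mem_head _ _)).
by rewrite opprD addrAC addNr add0r.
Qed.

Lemma fin_gen (A : comNzRingType) (Good : A -> Prop) :
  (forall m : {pred A}, maximal_ideal m -> exists s, s \notin m /\ Good s) ->
  exists l : seq (A * A), (forall pr, pr \in l -> Good pr.2) /\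
     \sum_(pr <- l) pr.1 * pr.2 = 1.
Proof.
move=> hloc.
pose I (x : A) := exists l : seq (A * A), (forall pr, pr \in l -> Good pr.2) /\
     \sum_(pr <- l) pr.1 * pr.2 = x.
apply: NNPP => hI1.
have I0 : I 0 by exists [::]; rewrite big_nil.
have Ilin : forall a x y, I x -> I y -> I (a * x + y).
  move=> a x y [lx [hx <-]] [ly [hy <-]].
  exists ([seq (a * pr.1, pr.2) | pr <- lx] ++ ly); split.
    move=> pr; rewrite mem_cat => /orP [/mapP [q hq ->]|/hy //].
    exact: (hx q hq).
  by rewrite big_cat big_map mulr_sumr; congr (_ + _); apply: eq_bigr => i _; rewrite mulrA.
pose Phi (J : A -> Prop) := [/\ J 0, ~ J 1, (forall a x y, J x -> J y -> J (a * x + y))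
   & (forall x, I x -> J x)].
case: (@zorn_max A Phi); last first.
  move=> M [[M0 M1 Mlin MI] hmax].
  pose m : {pred A} := fun x => bP (M x).
  have hm : forall x, x \in m <-> M x by move=> x; rewrite unfold_in /m bPT.
  have [s [hs hgood]] : exists s, s \notin m /\ Good s.
    apply: hloc; split.
      split; first by apply/hm.
        by apply/negP => /hm.
      by move=> a x y /hm hx /hm hy; apply/hm; apply: Mlin.
    move=> J [J0 J1 Jlin] hsub x.
    have hJ : forall t, M t -> t \in J by move=> t /hm; apply: hsub.
    have := hmax (fun t => t \in J).
    have PJ : Phi (fun t => t \in J).
      split => //; first by apply/negP.
      by move=> t /MI; apply: hJ.
    move=> /(_ PJ hJ) hJM.
    apply/idP/idP => [/hJM /hm //|/hm]; apply: hJ.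
  apply: (negP hs); apply/hm; apply: MI.
  by exists [:: (1, s)]; split; [move=> pr; rewrite inE => /eqP -> |rewrite big_seq1 mul1r].
- move=> F hF hch [X0 FX0].
  have two : forall x y, (exists X, F X /\ X x) -> (exists X, F X /\ X y) ->
      exists X, [/\ F X, X x & X y].
    move=> x y [X [FX Xx]] [Y [FY Yy]].
    case: (hch _ _ FX FY) => h; first by exists Y; split => //; apply: h.
    by exists X; split => //; apply: h.
  split.
  + by exists X0; split => //; have [] := hF _ FX0.
  + by move=> [X [FX X1]]; have [] := hF _ FX; move=> _ h _ _; exact: h X1.
  + move=> a x y hx hy; have [X [FX Xx Xy]] := two _ _ hx hy.
    by exists X; split => //; have [_ _ hl _] := hF _ FX; apply: hl.
  + by move=> x hx; exists X0; split => //; have [_ _ _ hs] := hF _ FX0; apply: hs.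
- by move=> X [h0 _ _ _]; exists 0.
- by exists I; split.
Qed.


Theorem theorem4p2 (A : comNzRingType) (T : {pred A}) (f : A)
  (hT : is_semiring T) (harch : archimedean_semiring T)
  (hinv : exists n : nat, (1 < n)%N /\ exists u : A, u \in T /\ n%:R * u = 1)
  (hloc : forall m : {pred A}, maximal_ideal m ->
     exists s : A, s \notin m /\ nonneg_on_XA T s /\ s * f \in T) :
  f \in T.
Proof.
have [n [hn [u [hu hnu]]]] := hinv.
pose Good (s : A) := nonneg_on_XA T s /\ s * f \in T.
have [l [hl1 hl2]] := @fin_gen A Good hloc.
have TbD' := TbD hT hn hu hnu.
have TbM' := TbM hT harch hn hu hnu.
have TbT := Tb_T hT hu.
have hpre : preord (Tb T u).
  by split; [exact: TbD'|exact: TbM'|exact: (Tb_sq hT harch hn hu hnu)].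
pose g := \sum_(pr <- l) pr.2.
have [e hg] : exists e, Tb T u (g - u ^+ e).
  case: (classic (ext (Tb T u) (- g) (-1))) => [[p [q [hp hq E]]]|hno].
    apply: (DL hT harch hn hu hnu (q := q) (j := 0%N)) => //.
    by have -> : g * q - u ^+ 0 = p by rewrite expr0 E; ring.
  exfalso.
  have [C hC] := pstz (ext_preord (- g) hpre) hno.
  have hCT : forall a, a \in T -> C a.
    by move=> a ha; apply: hC; apply: ext_sub => //; apply: TbT.
  have hX : in_XA T (pc_sper C) by move=> a /hCT /pc_sper_ge0.
  have hs : forall x, x \in [seq pr.2 | pr <- l] -> C x.
    move=> x /mapP [pr hpr ->]; apply/pc_sper_ge0.
    by have [h _] := hl1 pr hpr; apply: h.
  have hng : C (- \sum_(x <- [seq pr.2 | pr <- l]) x).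
    by rewrite big_map; apply: hC; apply: ext_c.
  have hsupp := pc_list hs hng.
  have : 1 \in supp C.
    rewrite -hl2; apply: (sum_in (P := fun x => x \in supp C)).
    - by apply/suppE; rewrite oppr0; split; apply: pc0.
    - move=> x y /suppE [h1 h2] /suppE [h3 h4]; apply/suppE.
      by rewrite opprD; split; apply: pc_add.
    - move=> pr hpr; apply: supp_mul; apply/suppE; split.
        by apply: hs; apply/mapP; exists pr.
      by apply: hsupp; apply/mapP; exists pr.
  by move/suppE => [_ h]; apply: (pc_n1 h).
have [k hk] := arch_pow hT harch hn (- g).
pose c := u ^+ k.
pose y := 1 - c * g.
have hy : Tb T u y.
  apply: TbT; have -> : y = u ^+ k * ((n ^ k)%N%:R - g).
    by rewrite /y /c mulrBr [u ^+ k * _%:R]mulrC (nuX hnu).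
  by apply: (TM hT) => //; apply: (Tu hT hu).
have hgap : Tb T u ((1 - u ^+ (k + e).+1) - y).
  have -> : (1 - u ^+ (k + e).+1) - y = c * g - u ^+ (k + e).+1 by rewrite /y; ring.
  apply: (TbB_u hT hn hu hnu (leqnSn _)).
  have -> : c * g - u ^+ (k + e) = c * (g - u ^+ e) by rewrite /c exprD; ring.
  by apply: TbM' => //; apply: TbT; apply: (Tu hT hu).
have [B hB] : exists B : nat, forall pr, pr \in l -> Tb T u (pr.1 + B%:R).
  elim: (l) => [|x l' [B' hB']]; first by exists 0%N.
  have [N hN] := arch_nat hT harch x.1.
  exists (B' + N)%N => pr; rewrite inE => /orP [/eqP ->|hpr].
    apply: TbT; rewrite natrD addrCA addrC [x.1 + _]addrC; apply: (TD hT) => //; apply: (Tn hT).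
  rewrite natrD addrA; apply: TbD'; [exact: hB'|apply: TbT; apply: (Tn hT)].
have [K hK] := CORE hT harch hn hu hnu B k (ltn0Sn _) hy hgap.
pose t (pr : A * A) := c * (\sum_(i < K.+1) y ^+ i) + pr.1 * y ^+ K.+1.
have ht : forall pr, pr \in l -> t pr \in T.
  move=> pr hpr; apply: (@Tb_lift A T u _ k.+1).
  apply: hK; last exact: hB.
  by rewrite subrr; apply: TbT; apply: (T0 hT).
have hsum : \sum_(pr <- l) t pr * pr.2 = 1.
  rewrite (eq_bigr (fun pr => (c * (\sum_(i < K.+1) y ^+ i)) * pr.2 + y ^+ K.+1 * (pr.1 * pr.2)));
    last by move=> pr _; rewrite /t; ring.
  rewrite big_split /= -!mulr_sumr hl2 mulr1 -/g.
  have -> : c * (\sum_(i < K.+1) y ^+ i) * g = (1 - y) * (\sum_(i < K.+1) y ^+ i) by rewrite /y; ring.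
  by rewrite geom_sum subrK.
rewrite -[f]mul1r -hsum mulr_suml.
apply: (sum_in (P := fun x => x \in T)); [exact: (T0 hT)|exact: (TD hT)|].
move=> pr hpr; rewrite -mulrA; apply: (TM hT); first exact: ht.
by have [_ h] := hl1 pr hpr.
Qed.
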